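(* Let $\mathbf{x}_k\in\mathbb{R}^d$ and $\sigma_k>0$, and let $\epsilon>0$. Suppose the sampled estimates $\mathbf{g}_k,\mathbf{B}_k,\mathbf{T}_k$ at $\mathbf{x}_k$ satisfy the sampling condition with accuracy $\epsilon$ and constants $\kappa_g=\frac14,\kappa_b=\frac14,\kappa_t=\frac12$, and set $\epsilon_1:=\epsilon$. Let $\mathbf{s}_k$ satisfy the approximate minimization condition with constant $\theta>0$. Then $$\|\mathbf{s}_k\|\ge\kappa_k^{-1/3}\left(\chi_{f,1}(\mathbf{x}_k+\mathbf{s}_k)-\tfrac12\epsilon_1\right)^{1/3},\qquad\kappa_k=\sigma_k+\frac{L_t}{2}+\theta+\frac14,$$ where $(\cdot)^{1/3}$ is the real cube root.
   Context: $f(\mathbf{x})=\frac1n\sum_{i=1}^n f_i(\mathbf{x})$, each $f_i\in C^3(\mathbb{R}^d,\mathbb{R})$ with $f_i,\nabla f_i,\nabla^2 f_i,\nabla^3 f_i$ Lipschitz with constants $L_f,L_g,L_b,L_t$ (Euclidean norm on vectors; on $p$-th order tensors $\|A\|_{[p]}=\max_{\|\mathbf{h}_1\|=\dots=\|\mathbf{h}_p\|=1}|A[\mathbf{h}_1,\dots,\mathbf{h}_p]|$). For a third-order tensor $T$: $T[\mathbf{s}]^2=(\sum_{j,k}T_{ijk}s_js_k)_i$, $T[\mathbf{s}]^3=\sum_{i,j,k}T_{ijk}s_is_js_k$. Sampled estimates: $\mathbf{g}_k=\frac{1}{|\mathcal{S}^g|}\sum_{i\in\mathcal{S}^g}\nabla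 f_i(\mathbf{x}_k)$, $\mathbf{B}_k=\frac{1}{|\mathcal{S}^b|}\sum_{i\in\mathcal{S}^b}\nabla^2 f_i(\mathbf{x}_k)$, $\mathbf{T}_k=\frac{1}{|\mathcal{S}^t|}\sum_{i\in\mathcal{S}^t}\nabla^3 f_i(\mathbf{x}_k)$ for index sets $\mathcal{S}^g,\mathcal{S}^b,\mathcal{S}^t\subseteq\{1,\dots,n\}$. Model: $\phi_k(\mathbf{s})=f(\mathbf{x}_k)+\mathbf{g}_k^\top\mathbf{s}+\frac12\mathbf{s}^\top\mathbf{B}_k\mathbf{s}+\frac16\mathbf{T}_k[\mathbf{s}]^3$, $m_k(\mathbf{s})=\phi_k(\mathbf{s})+\frac{\sigma_k}{4}\|\mathbf{s}\|^4$. Sampling condition (accuracy $\epsilon$, constants $\kappa_g,\kappa_b,\kappa_t$): $\|\mathbf{g}_k-\nabla f(\mathbf{x}_k)\|\le\kappa_g\epsilon$; $\|(\mathbf{B}_k-\nabla^2 f(\mathbf{x}_k))\mathbf{s}\|\le\kappa_b\epsilon^{2/3}\|\mathbf{s}\|$ and $\|\mathbf{T}_k[\mathbf{s}]^2-\nabla^3 f(\mathbf{x}_k)[\mathbf{s}]^2\|\le\kappa_t\epsilon^{1/3}\|\mathbf{s}\|^2$ for all $\mathbf{s}\in\mathbb{R}^d$. Approximate minimization condition (constants $\theta>0,\zeta>0$): $m_k(\mathbf{s}_k)<m_k(\mathbf{0})$ and $\chi_{m,i}(\mathbf{x}_k,\mathbf{s}_k)\le\theta\|\mathbf{s}_k\|^{4-i}$,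 $i=1,2,3$, with $\chi_{m,1}=\|\nabla m_k(\mathbf{s})\|$, $\chi_{m,2}=\max(0,-\lambda_{min}(\nabla^2 m_k(\mathbf{s})))$, $\chi_{m,3}=\max\{|\nabla^3 m_k(\mathbf{s})[\mathbf{y}]^3|:\|\mathbf{y}\|=1,|\mathbf{y}^\top\nabla^2 m_k(\mathbf{s})\mathbf{y}|\le\zeta\}$ (empty maximum $=0$). Criticality: $\chi_{f,1}(\mathbf{x})=\|\nabla f(\mathbf{x})\|$. *)

(* Defs.v *)
From HB Require Import structures.
From mathcomp Require Import all_boot all_order all_algebra.
From mathcomp Require Import all_classical all_reals all_analysis.
Set Implicit Arguments. Unset Strict Implicit. Unset Printing Implicit Defensive.
Import Order.TTheory GRing.Theory Num.Theory.
Import numFieldNormedType.Exports.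
Local Open Scope classical_set_scope.
Local Open Scope ring_scope.

Section Defs.
Variables (R : realType) (d : nat).

Notation vec := 'rV[R]_d.
Definition tens := 'I_d -> 'I_d -> 'I_d -> R.

Definition dotv (u v : vec) : R := \sum_(j < d) u 0 j * v 0 j.
Definition enorm (v : vec) : R := Num.sqrt (dotv v v).
Definition matvec (B : 'M[R]_d) (s : vec) : vec := s *m B^T.
Definition quad (B : 'M[R]_d) (s : vec) : R := dotv s (matvec B s).
Definition tens3 (A : tens) (h1 h2 h3 : vec) : R :=
  \sum_(i < d) \sum_(j < d) \sum_(k < d) A i j k * h1 0 i * h2 0 j * h3 0 k.
Definition tens_sq (A : tens) (s : vec) : vec :=
  \row_(i < d) \sum_(j < d) \sum_(k < d) A i j k * s 0 j * s 0 k.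
Definition tens_cube (A : tens) (s : vec) : R := tens3 A s s s.
Definition tens_app (A : tens) (v : vec) : 'M[R]_d :=
  \matrix_(i < d, j < d) \sum_(k < d) A i j k * v 0 k.
Definition tens_sub (A B : tens) : tens := fun i j k => A i j k - B i j k.

Definition is_grad (f : vec -> R) (G : vec -> vec) :=
  forall x v : vec, is_derive x v f (dotv (G x) v).
Definition is_hess (G : vec -> vec) (H : vec -> 'M[R]_d) :=
  forall x v : vec, is_derive x v G (matvec (H x) v).
Definition is_third (H : vec -> 'M[R]_d) (T : vec -> tens) :=
  forall x v : vec, is_derive x v H (tens_app (T x) v).

(* Lipschitz conditions, with the Euclidean norm on vectors and the
   norm ||A||_[p] = max_{||h_i||=1} |A[h_1,..,h_p]| on tensors, unfolded *)
Definition lip0 (f : vec -> R) (L : R) :=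
  forall x y : vec, `|f x - f y| <= L * enorm (x - y).
Definition lip1 (G : vec -> vec) (L : R) :=
  forall x y : vec, enorm (G x - G y) <= L * enorm (x - y).
Definition lip2 (H : vec -> 'M[R]_d) (L : R) :=
  forall x y h1 h2 : vec, enorm h1 = 1 -> enorm h2 = 1 ->
    `|dotv h1 (matvec (H x - H y) h2)| <= L * enorm (x - y).
Definition lip3 (T : vec -> tens) (L : R) :=
  forall x y h1 h2 h3 : vec, enorm h1 = 1 -> enorm h2 = 1 -> enorm h3 = 1 ->
    `|tens3 (tens_sub (T x) (T y)) h1 h2 h3| <= L * enorm (x - y).

Definition lambda_min (A : 'M[R]_d) : R := inf [set a : R | eigenvalue A a].

Definition chi_m1 (Dm1 : vec) : R := enorm Dm1.
Definition chi_m2 (Dm2 : 'M[R]_d) : R := Num.max 0 (- lambda_min Dm2).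
(* max over an empty set is 0, as sup set0 = 0 *)
Definition chi_m3 (zeta : R) (Dm2 : 'M[R]_d) (Dm3 : tens) : R :=
  sup [set `|tens_cube Dm3 y| | y in
        [set y : vec | enorm y = 1 /\ `|quad Dm2 y| <= zeta]].

Definition avg_s {n : nat} (S : {set 'I_n}) (F : 'I_n -> R) : R :=
  #|S|%:R^-1 * \sum_(i in S) F i.
Definition avg_v {n : nat} (S : {set 'I_n}) (F : 'I_n -> vec) : vec :=
  #|S|%:R^-1 *: \sum_(i in S) F i.
Definition avg_m {n : nat} (S : {set 'I_n}) (F : 'I_n -> 'M[R]_d) : 'M[R]_d :=
  #|S|%:R^-1 *: \sum_(i in S) F i.
Definition avg_t {n : nat} (S : {set 'I_n}) (F : 'I_n -> tens) : tens :=
  fun a b c => #|S|%:R^-1 * \sum_(i in S) F i a b c.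

End Defs.

Definition cbrt {R : realType} (x : R) : R :=
  if 0 <= x then powR x (1/3) else - powR (- x) (1/3).

(* Main.v *)
Require Import Defs.
From HB Require Import structures.
From mathcomp Require Import all_boot all_order all_algebra.
From mathcomp Require Import all_classical all_reals all_analysis.
From mathcomp Require Import ring lra.
Set Implicit Arguments. Unset Strict Implicit. Unset Printing Implicit Defensive.
Import Order.TTheory GRing.Theory Num.Theory.
Import numFieldNormedType.Exports.
Local Open Scope classical_set_scope.
Local Open Scope ring_scope.
Section Basic.
Variables (R : realType) (d : nat).
Local Notation vec := 'rV[R]_d.
Implicit Types u v w : vec.

Lemma dotvC u v : dotv u v = dotv v u.
Proof. by apply: eq_bigr => j _; rewrite mulrC. Qed.

Lemma dotvDr u v w : dotv u (v + w) = dotv u v + dotv u w.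
Proof. by rewrite /dotv -big_split; apply: eq_bigr => j _; rewrite mxE mulrDr. Qed.

Lemma dotvNr u v : dotv u (- v) = - dotv u v.
Proof. by rewrite /dotv -sumrN; apply: eq_bigr => j _; rewrite mxE mulrN. Qed.

Lemma dotvBr u v w : dotv u (v - w) = dotv u v - dotv u w.
Proof. by rewrite dotvDr dotvNr. Qed.

Lemma dotvZr u v (k : R) : dotv u (k *: v) = k * dotv u v.
Proof. by rewrite /dotv mulr_sumr; apply: eq_bigr => j _; rewrite mxE mulrCA. Qed.

Lemma dotvZl u v (k : R) : dotv (k *: u) v = k * dotv u v.
Proof. by rewrite dotvC dotvZr dotvC. Qed.

Lemma dotvDl u v w : dotv (v + w) u = dotv v u + dotv w u.
Proof. by rewrite dotvC dotvDr !(dotvC u). Qed.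

Lemma dotvNl u v : dotv (- v) u = - dotv v u.
Proof. by rewrite dotvC dotvNr dotvC. Qed.

Lemma dotvBl u v w : dotv (v - w) u = dotv v u - dotv w u.
Proof. by rewrite dotvDl dotvNl. Qed.

Lemma dotv0r u : dotv u 0 = 0.
Proof. by rewrite /dotv big1 // => j _; rewrite mxE mulr0. Qed.

Lemma dotvv_ge0 v : 0 <= dotv v v.
Proof. by apply: sumr_ge0 => j _; rewrite -expr2 sqr_ge0. Qed.

Lemma dotvv_eq0 v : dotv v v = 0 -> v = 0.
Proof.
move=> h; apply/matrixP => i j; rewrite !mxE (ord1 i).
have /eqP := h; rewrite psumr_eq0; last by move=> k _; rewrite -expr2 sqr_ge0.
by move/allP/(_ j (mem_index_enum _)); rewrite -expr2 sqrf_eq0 => /eqP.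
Qed.

Lemma enorm_ge0 v : 0 <= enorm v.
Proof. exact: sqrtr_ge0. Qed.

Lemma enorm_sq v : enorm v ^+ 2 = dotv v v.
Proof. by rewrite /enorm sqr_sqrtr // dotvv_ge0. Qed.

Lemma enorm0 : enorm (0 : vec) = 0.
Proof. by rewrite /enorm dotv0r sqrtr0. Qed.

Lemma enorm_eq0 v : enorm v = 0 -> v = 0.
Proof. by move=> h; apply: dotvv_eq0; rewrite -enorm_sq h expr0n. Qed.

Lemma enormZ (k : R) v : enorm (k *: v) = `|k| * enorm v.
Proof.
by rewrite /enorm dotvZl dotvZr mulrA -expr2 sqrtrM ?sqr_ge0 // sqrtr_sqr.
Qed.

Lemma enormN v : enorm (- v) = enorm v.
Proof. by rewrite /enorm dotvNl dotvNr opprK. Qed.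

Lemma CS2 u v : dotv u v ^+ 2 <= dotv u u * dotv v v.
Proof.
set a := dotv v v; set b := dotv u v; set c := dotv u u.
have q t : 0 <= c - 2 * t * b + t ^+ 2 * a.
  have := dotvv_ge0 (u - t *: v).
  rewrite dotvBl !dotvBr !dotvZl !dotvZr (dotvC v u) -/a -/b -/c.
  move=> h; apply: le_trans h _; rewrite le_eqVlt; apply/orP; left; apply/eqP; ring.
have a0 : 0 <= a by apply: dotvv_ge0.
have c0 : 0 <= c by apply: dotvv_ge0.
have [a_eq0|a_gt0] := eqVneq a 0.
  have [b_eq0|b_neq0] := eqVneq b 0; first by rewrite b_eq0 expr0n /= mulr_ge0.
  have := q ((c + 1) / (2 * b)); rewrite a_eq0 mulr0 addr0.
  have -> : 2 * ((c + 1) / (2 * b)) * b = c + 1 by field; rewrite b_neq0.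
  lra.
have ap : 0 < a by rewrite lt_def a_gt0 a0.
have := q (b / a).
have -> : (b / a) ^+ 2 * a = b ^+ 2 / a by field.
have -> : 2 * (b / a) * b = 2 * (b ^+ 2 / a) by rewrite expr2; ring.
move=> h.
have : b ^+ 2 / a <= c by lra.
by rewrite ler_pdivrMr // mulrC.
Qed.

Lemma CS u v : `|dotv u v| <= enorm u * enorm v.
Proof.
rewrite /enorm -sqrtrM ?dotvv_ge0 // -sqrtr_sqr ler_sqrt ?CS2 //.
by rewrite mulr_ge0 ?dotvv_ge0.
Qed.

Lemma CS' u v : dotv u v <= enorm u * enorm v.
Proof. exact: le_trans (ler_norm _) (CS u v). Qed.

Lemma enormD u v : enorm (u + v) <= enorm u + enorm v.
Proof.
rewrite {1}/enorm -(ger0_norm (addr_ge0 (enorm_ge0 u) (enorm_ge0 v))) -sqrtr_sqr.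
rewrite ler_sqrt ?sqr_ge0 // sqrrD !enorm_sq dotvDl !dotvDr (dotvC v u).
have := CS' u v; lra.
Qed.

End Basic.
Section Deriv.
Variables (R : realType) (V : normedModType R).

Lemma is_derive_entry m n (M : V -> 'M[R]_(m, n)) x v (dM : 'M[R]_(m, n)) i j :
  is_derive x v M dM -> is_derive x v (fun y => M y i j) (dM i j).
Proof.
move=> [dM1 dM2].
have := (derivable_mxP M x v).1 dM1 i j => di.
split => //.
by rewrite -dM2 derive_mx // mxE.
Qed.

Lemma is_derive_mx m n (M : V -> 'M[R]_(m, n)) x v (dM : 'M[R]_(m, n)) :
  (forall i j, is_derive x v (fun y => M y i j) (dM i j)) -> is_derive x v M dM.
Proof.
move=> h.
have dv : derivable M x v by apply/derivable_mxP => i j; case: (h i j).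
split => //; rewrite derive_mx //; apply/matrixP => i j; rewrite mxE.
by case: (h i j).
Qed.

Lemma is_derive_sum' k (h : 'I_k -> V -> R) x v (dh : 'I_k -> R) :
  (forall i, is_derive x v (h i) (dh i)) ->
  is_derive x v (fun y => \sum_(i < k) h i y) (\sum_(i < k) dh i).
Proof.
move=> H; have := is_derive_sum H.
by rewrite fct_sumE.
Qed.

Lemma is_deriveZ' (f : V -> R) (c : R) x v df :
  is_derive x v f df -> is_derive x v (fun y => c * f y) (c * df).
Proof. by move=> H; have := is_deriveZ c H. Qed.

Lemma is_deriveZr' (f : V -> R) (c : R) x v df :
  is_derive x v f df -> is_derive x v (fun y => f y * c) (df * c).
Proof.
move=> H; have := is_deriveZ c H.
have -> : c \*: f = (fun y => f y * c) by apply/funext => y; rewrite /= mulrC.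
by rewrite mulrC.
Qed.

Lemma is_deriveM' (f g : V -> R) x v df dg :
  is_derive x v f df -> is_derive x v g dg ->
  is_derive x v (fun y => f y * g y) (f x * dg + g x * df).
Proof. by move=> H1 H2; have := is_deriveM H1 H2. Qed.

Lemma is_deriveD' (f g : V -> R) x v df dg :
  is_derive x v f df -> is_derive x v g dg ->
  is_derive x v (fun y => f y + g y) (df + dg).
Proof. by move=> H1 H2; have := is_deriveD H1 H2. Qed.

Lemma is_deriveB' (f g : V -> R) x v df dg :
  is_derive x v f df -> is_derive x v g dg ->
  is_derive x v (fun y => f y - g y) (df - dg).
Proof. by move=> H1 H2; have := is_deriveB H1 H2. Qed.

Lemma is_deriveN' (f : V -> R) x v df :
  is_derive x v f df -> is_derive x v (fun y => - f y) (- df).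
Proof. by move=> H1; have := is_deriveN H1. Qed.

Lemma is_derive_ext (f g : V -> R) x v df :
  (forall y, f y = g y) -> is_derive x v f df -> is_derive x v g df.
Proof. by move=> e; have -> : f = g by apply/funext. Qed.

Lemma is_derive_line (W : normedModType R) (F : V -> W) y v (t : R) df :
  is_derive (y + t *: v) v F df ->
  is_derive t (1 : R) (fun s : R => F (y + s *: v)) df.
Proof.
move=> [H1 H2].
have e : (fun h : R => h^-1 *: (((fun s : R => F (y + s *: v)) \o shift t) (h *: (1:R)) - F (y + t *: v)))
  = (fun h : R => h^-1 *: ((F \o shift (y + t *: v)) (h *: v) - F (y + t *: v))).
  apply/funext => h /=; congr (_ *: (F _ - _)).
  by rewrite [h%:A]mulr1 scalerDl addrCA.
split; first by rewrite /derivable e.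
by rewrite /derive e.
Qed.

End Deriv.
Section OneD.
Variable (R : realType).

Lemma is_derive_pow (n : nat) (t : R) :
  is_derive t (1 : R) (fun s : R => s ^+ n.+1) (n.+1%:R * t ^+ n).
Proof.
split; first exact: exprn_derivable.
by rewrite exp_derive /= [_ *: 1]mulr1.
Qed.

Lemma is_derive_lin (t c : R) : is_derive t (1:R) (fun s : R => s * c) c.
Proof.
have := is_deriveZr' c (is_derive_id t (1:R)).
by rewrite mul1r.
Qed.

Lemma is_derive_sqrc (t c : R) : is_derive t (1:R) (fun s : R => s ^+ 2 * c) (2 * t * c).
Proof.
have := is_deriveZr' c (is_derive_pow 1 t).
by rewrite expr1.
Qed.

Lemma mvt_le (g dg : R -> R) (a b : R) : a <= b ->
  (forall t, is_derive t (1 : R) g (dg t)) ->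
  (forall t, a <= t <= b -> dg t <= 0) -> g b <= g a.
Proof.
move=> ab hd hneg.
have cont : {within `[a, b], continuous g}%classic.
  by apply: derivable_within_continuous => t _; case: (hd t).
have [c] := MVT_segment ab (fun t _ => hd t) cont.
rewrite in_itv /= => /andP[c1 c2] e.
by rewrite -subr_le0 e mulr_le0_ge0 ?hneg ?c1 ?c2 // subr_ge0.
Qed.

Lemma bound1D (phi dphi : R -> R) (c : R) (k : nat) :
  (forall t, is_derive t (1 : R) phi (dphi t)) ->
  (forall t, 0 <= t <= 1 -> `|dphi t| <= c * t ^+ k) ->
  forall t, 0 <= t <= 1 -> `|phi t - phi 0| <= c / k.+1%:R * t ^+ k.+1.
Proof.
move=> hd hb t /andP[t0 t1].
have kp : 0 < k.+1%:R :> R by rewrite ltr0n.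
have hb' s : 0 <= s <= t -> `|dphi s| <= c * s ^+ k.
  move=> /andP[s0 st]; apply: hb; rewrite s0 /=; exact: le_trans st t1.
rewrite ler_norml; apply/andP; split.
-
  pose h := fun s => - phi s - c / k.+1%:R * s ^+ k.+1.
  have dh s : is_derive s (1:R) h (- dphi s - c / k.+1%:R * (k.+1%:R * s ^+ k)).
    rewrite /h; apply: is_deriveB'; try exact: is_deriveZ' (is_derive_pow k s).
  have H2 : h t <= h 0.
    apply: (@mvt_le h (fun s => - dphi s - c * s ^+ k) 0 t t0).
      by move=> s; apply: is_derive_eq (dh s) _; rewrite mulrA divfK // gt_eqF.
    move=> s /hb'; rewrite ler_norml => /andP[a b]; cbv beta.
    by rewrite subr_le0 lerNl.
  move: H2; rewrite /h expr0n /= mulr0 subr0 => H2; set X := (c / _ * _) in H2 *; set P := phi t in H2 *; set Q := phi 0 in H2 *; lra.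
- pose h := fun s => phi s - c / k.+1%:R * s ^+ k.+1.
  have dh s : is_derive s (1:R) h (dphi s - c / k.+1%:R * (k.+1%:R * s ^+ k)).
    rewrite /h; apply: is_deriveB'; try exact: is_deriveZ' (is_derive_pow k s).
  have H2 : h t <= h 0.
    apply: (@mvt_le h (fun s => dphi s - c * s ^+ k) 0 t t0).
      by move=> s; apply: is_derive_eq (dh s) _; rewrite mulrA divfK // gt_eqF.
    move=> s /hb'; rewrite ler_norml => /andP[a b]; cbv beta.
    by rewrite subr_le0.
  move: H2; rewrite /h expr0n /= mulr0 subr0 => H2; set X := (c / _ * _) in H2 *; set P := phi t in H2 *; set Q := phi 0 in H2 *; lra.
Qed.

End OneD.
Section Vecs.
Variables (R : realType) (d : nat).
Local Notation vec := 'rV[R]_d.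
Implicit Types u v w : vec.

Definition ev (j : 'I_d) : vec := delta_mx 0 j.

Lemma dotv_ev i v : dotv (ev i) v = v 0 i.
Proof.
rewrite /dotv (bigD1 i) //= big1 ?addr0; first by rewrite mxE !eqxx mul1r.
by move=> j ji; rewrite mxE eqxx (negbTE ji) mul0r.
Qed.

Lemma dotv_evr i v : dotv v (ev i) = v 0 i.
Proof. by rewrite dotvC dotv_ev. Qed.

Lemma enorm_ev i : enorm (ev i) = 1.
Proof. by rewrite /enorm dotv_ev mxE !eqxx sqrtr1. Qed.

Lemma matvecE (M : 'M[R]_d) v a : matvec M v 0 a = \sum_(b < d) M a b * v 0 b.
Proof. by rewrite /matvec mxE; apply: eq_bigr => b _; rewrite mxE mulrC. Qed.

Lemma matvec_ev (M : 'M[R]_d) j a : matvec M (ev j) 0 a = M a j.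
Proof.
rewrite matvecE (bigD1 j) //= big1 ?addr0; first by rewrite mxE !eqxx mulr1.
by move=> b bj; rewrite mxE eqxx (negbTE bj) mulr0.
Qed.

Lemma dotv_matvec u (M : 'M[R]_d) v :
  dotv u (matvec M v) = \sum_(a < d) \sum_(b < d) M a b * (u 0 a * v 0 b).
Proof.
rewrite /dotv; apply: eq_bigr => a _; rewrite matvecE mulr_sumr.
by apply: eq_bigr => b _; rewrite mulrCA mulrA [_ * u 0 a]mulrC -mulrA.
Qed.

Lemma dotv_ev_matvec_ev (M : 'M[R]_d) i j : dotv (ev i) (matvec M (ev j)) = M i j.
Proof. by rewrite dotv_ev matvec_ev. Qed.

Lemma sum_ev (F : 'I_d -> R) i : \sum_(a < d) F a * ev i 0 a = F i.
Proof.
rewrite (bigD1 i) //= big1 ?addr0; first by rewrite mxE !eqxx mulr1.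
by move=> b bj; rewrite mxE eqxx (negbTE bj) mulr0.
Qed.

Lemma tens3_ev (A : tens R d) i j k : tens3 A (ev i) (ev j) (ev k) = A i j k.
Proof.
rewrite /tens3.
under eq_bigr do under eq_bigr do rewrite sum_ev.
under eq_bigr do rewrite sum_ev.
by rewrite sum_ev.
Qed.

Lemma matvecB (A B : 'M[R]_d) v : matvec (A - B) v = matvec A v - matvec B v.
Proof. by rewrite /matvec linearB /= mulmxBr. Qed.

Lemma tens3_sq (A : tens R d) u v : tens3 A u v v = dotv u (tens_sq A v).
Proof.
rewrite /tens3 /dotv; apply: eq_bigr => i _; rewrite mxE mulr_sumr.
apply: eq_bigr => j _; rewrite mulr_sumr; apply: eq_bigr => k _.
ring.
Qed.

End Vecs.
Arguments ev {R d} j.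

Section DerivVec.
Variables (R : realType) (d : nat) (V : normedModType R).
Local Notation vec := 'rV[R]_d.

Lemma is_derive_dot (G : V -> vec) x v dG (w : vec) :
  is_derive x v G dG -> is_derive x v (fun y => dotv w (G y)) (dotv w dG).
Proof.
move=> H; rewrite /dotv; apply: is_derive_sum' => j.
exact: is_deriveZ' (is_derive_entry 0 j H).
Qed.

Lemma is_derive_dotmat (H : V -> 'M[R]_d) x v dH (u z : vec) :
  is_derive x v H dH ->
  is_derive x v (fun y => dotv u (matvec (H y) z)) (dotv u (matvec dH z)).
Proof.
move=> D.
apply: (is_derive_ext (f := fun y => \sum_(a < d) \sum_(b < d) H y a b * (u 0 a * z 0 b))).
  by move=> y; rewrite dotv_matvec.
rewrite dotv_matvec; apply: is_derive_sum' => a; apply: is_derive_sum' => b.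
exact: is_deriveZr' (is_derive_entry a b D).
Qed.

Lemma is_derive_dotprod (F G : V -> vec) x v dF dG :
  is_derive x v F dF -> is_derive x v G dG ->
  is_derive x v (fun y => dotv (F y) (G y)) (dotv dF (G x) + dotv (F x) dG).
Proof.
move=> DF DG.
have -> : dotv dF (G x) + dotv (F x) dG = \sum_(j < d) (F x 0 j * dG 0 j + G x 0 j * dF 0 j).
  rewrite /dotv addrC -big_split; apply: eq_bigr => j _; rewrite mulrC.
  by rewrite [dF 0 j * _]mulrC.
rewrite /dotv; apply: is_derive_sum' => j.
exact: is_deriveM' (is_derive_entry 0 j DF) (is_derive_entry 0 j DG).
Qed.

End DerivVec.
Section Schwarz.
Variables (R : realType) (d : nat).
Local Notation vec := 'rV[R]_d.

Lemma mvt_ex (g dg : R -> R) (l : R) : 0 <= l ->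
  (forall t, is_derive t (1 : R) g (dg t)) ->
  exists c, 0 <= c <= l /\ g l - g 0 = dg c * l.
Proof.
move=> l0 hd.
have cont : {within `[0, l], continuous g}%classic.
  by apply: derivable_within_continuous => t _; case: (hd t).
have [c] := MVT_segment l0 (fun t _ => hd t) cont.
rewrite in_itv /= => c12 e; exists c; split => //.
by rewrite e subr0.
Qed.

Lemma small0 (D K : R) : 0 <= K -> (forall l, 0 < l -> `|D| <= K * l) -> D = 0.
Proof.
move=> K0 h; apply/eqP; apply/negPn/negP => D0.
have Dp : 0 < `|D| by rewrite normr_gt0.
have lp : 0 < `|D| / (K + 1) by rewrite divr_gt0 // ltr_wpDl.
have H := h _ lp.
have K1 : K + 1 != 0 by rewrite gt_eqF // ltr_wpDl.
have e : K * (`|D| / (K + 1)) = `|D| - `|D| / (K + 1) by field.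
rewrite e in H; lra.
Qed.

Lemma diff_xy (x a b : vec) : x + a + b - x = a + b.
Proof. by rewrite addrC !addrA addNr add0r. Qed.

Lemma schwarz (phi p q r s : vec -> R) (u w x : vec) (L : R) :
  enorm u <= 1 -> enorm w <= 1 ->
  (forall y, is_derive y u phi (p y)) -> (forall y, is_derive y w phi (q y)) ->
  (forall y, is_derive y w p (r y)) -> (forall y, is_derive y u q (s y)) ->
  (forall y, `|r y - r x| <= L * enorm (y - x)) ->
  (forall y, `|s y - s x| <= L * enorm (y - x)) ->
  r x = s x.
Proof.
move=> nu nw hp hq hr hs lr ls.
apply/eqP; rewrite -subr_eq0; apply/eqP.
apply: (@small0 _ (4 * `|L|)); first by rewrite mulr_ge0.
move=> l l0.
pose D1 := fun a : R => phi ((x + l *: w) + a *: u) - phi (x + a *: u).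
have dD1 a : is_derive a (1:R) D1 (p ((x + l *: w) + a *: u) - p (x + a *: u)).
  apply: is_deriveB'; apply: is_derive_line; exact: hp.
have [al [al01 eal]] := mvt_ex (ltW l0) dD1.
pose E1 := fun b : R => p ((x + al *: u) + b *: w).
have dE1 b : is_derive b (1:R) E1 (r ((x + al *: u) + b *: w)).
  by apply: is_derive_line; exact: hr.
have [be [be01 ebe]] := mvt_ex (ltW l0) dE1.
pose D2 := fun b : R => phi ((x + l *: u) + b *: w) - phi (x + b *: w).
have dD2 b : is_derive b (1:R) D2 (q ((x + l *: u) + b *: w) - q (x + b *: w)).
  apply: is_deriveB'; apply: is_derive_line; exact: hq.
have [be2 [be201 ebe2]] := mvt_ex (ltW l0) dD2.
pose E2 := fun a : R => q ((x + be2 *: w) + a *: u).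
have dE2 a : is_derive a (1:R) E2 (s ((x + be2 *: w) + a *: u)).
  by apply: is_derive_line; exact: hs.
have [al2 [al201 eal2]] := mvt_ex (ltW l0) dE2.
set y1 := (x + al *: u) + be *: w.
set y2 := (x + be2 *: w) + al2 *: u.
have Q : r y1 * l * l = s y2 * l * l.
  rewrite -ebe -eal2.
  have -> : E1 l - E1 0 = p (x + l *: w + al *: u) - p (x + al *: u).
    by rewrite /E1 scale0r addr0 addrAC.
  have -> : E2 l - E2 0 = q (x + l *: u + be2 *: w) - q (x + be2 *: w).
    by rewrite /E2 scale0r addr0 addrAC.
  rewrite -eal -ebe2 /D1 /D2 !scale0r !addr0 (addrAC x (l *: w)).
  ring.
have e12 : r y1 = s y2.
  have l2 : l * l != 0 by rewrite mulf_neq0 // gt_eqF.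
  by move: Q; rewrite -!mulrA => /(mulIf l2).
have b1 : enorm (y1 - x) <= 2 * l.
  rewrite /y1 diff_xy; apply: le_trans (enormD _ _) _.
  rewrite !enormZ !ger0_norm ?(andP al01).1 ?(andP be01).1 //.
  have := enorm_ge0 u; have := enorm_ge0 w.
  case/andP: al01 => ? ?; case/andP: be01 => ? ?; nra.
have b2 : enorm (y2 - x) <= 2 * l.
  rewrite /y2 diff_xy; apply: le_trans (enormD _ _) _.
  rewrite !enormZ !ger0_norm ?(andP al201).1 ?(andP be201).1 //.
  have := enorm_ge0 u; have := enorm_ge0 w.
  case/andP: al201 => ? ?; case/andP: be201 => ? ?; nra.
have h1 : `|r y1 - r x| <= `|L| * (2 * l).
  apply: le_trans (lr y1) _; apply: le_trans (ler_wpM2r (enorm_ge0 _) (ler_norm L)) _.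
  by apply: ler_wpM2l => //.
have h2 : `|s y2 - s x| <= `|L| * (2 * l).
  apply: le_trans (ls y2) _; apply: le_trans (ler_wpM2r (enorm_ge0 _) (ler_norm L)) _.
  by apply: ler_wpM2l => //.
have -> : r x - s x = - (r y1 - r x) + (s y2 - s x) by rewrite e12; ring.
apply: le_trans (ler_normD _ _) _; rewrite normrN.
have -> : 4 * `|L| * l = `|L| * (2 * l) + `|L| * (2 * l) by ring.
exact: lerD.
Qed.

End Schwarz.
Section Sym.
Variables (R : realType) (d : nat).
Local Notation vec := 'rV[R]_d.

Lemma tens_app_ev (A : tens R d) c a b : tens_app A (ev c) a b = A a b c.
Proof. by rewrite mxE sum_ev. Qed.

Lemma hess_sym (f : vec -> R) G H LB :
  is_grad f G -> is_hess G H -> lip2 H LB -> forall y a b, H y a b = H y b a.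
Proof.
move=> hG hH lH x a b.
apply: (@schwarz R d f (fun y => G y 0 a) (fun y => G y 0 b)
          (fun y => H y a b) (fun y => H y b a) (ev a) (ev b) x LB).
- by rewrite enorm_ev.
- by rewrite enorm_ev.
- by move=> y; apply: is_derive_eq (hG y (ev a)) _; rewrite dotv_evr.
- by move=> y; apply: is_derive_eq (hG y (ev b)) _; rewrite dotv_evr.
- move=> y; apply: is_derive_eq (is_derive_entry 0 a (hH y (ev b))) _.
  by rewrite matvec_ev.
- move=> y; apply: is_derive_eq (is_derive_entry 0 b (hH y (ev a))) _.
  by rewrite matvec_ev.
- move=> y; have := lH y x (ev a) (ev b) (enorm_ev _ _) (enorm_ev _ _).
  by rewrite dotv_ev_matvec_ev !mxE.
- move=> y; have := lH y x (ev b) (ev a) (enorm_ev _ _) (enorm_ev _ _).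
  by rewrite dotv_ev_matvec_ev !mxE.
Qed.

Lemma third_sym23 (G : vec -> vec) H T LT :
  is_hess G H -> is_third H T -> lip3 T LT -> forall y a b c, T y a b c = T y a c b.
Proof.
move=> hH hT lT x a b c.
apply: (@schwarz R d (fun y => G y 0 a) (fun y => H y a b) (fun y => H y a c)
          (fun y => T y a b c) (fun y => T y a c b) (ev b) (ev c) x LT).
- by rewrite enorm_ev.
- by rewrite enorm_ev.
- move=> y; apply: is_derive_eq (is_derive_entry 0 a (hH y (ev b))) _.
  by rewrite matvec_ev.
- move=> y; apply: is_derive_eq (is_derive_entry 0 a (hH y (ev c))) _.
  by rewrite matvec_ev.
- move=> y; apply: is_derive_eq (is_derive_entry a b (hT y (ev c))) _.
  by rewrite tens_app_ev.
- move=> y; apply: is_derive_eq (is_derive_entry a c (hT y (ev b))) _.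
  by rewrite tens_app_ev.
- move=> y; have := lT y x (ev a) (ev b) (ev c) (enorm_ev _ _) (enorm_ev _ _) (enorm_ev _ _).
  by rewrite tens3_ev.
- move=> y; have := lT y x (ev a) (ev c) (ev b) (enorm_ev _ _) (enorm_ev _ _) (enorm_ev _ _).
  by rewrite tens3_ev.
Qed.

Lemma third_sym12 (H : vec -> 'M[R]_d) T :
  (forall y a b, H y a b = H y b a) -> is_third H T ->
  forall y a b c, T y a b c = T y b a c.
Proof.
move=> sH hT y a b c.
have h1 := is_derive_entry a b (hT y (ev c)).
have h2 := is_derive_entry b a (hT y (ev c)).
have e : (fun z => H z a b) = (fun z => H z b a) by apply/funext => z; exact: sH.
rewrite e in h1.
rewrite -(tens_app_ev (T y) c a b) -(tens_app_ev (T y) c b a).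
by rewrite -(@derive_val _ _ _ _ _ _ _ h1) -(@derive_val _ _ _ _ _ _ _ h2).
Qed.

End Sym.
Section Taylor.
Variables (R : realType) (d : nat).
Local Notation vec := 'rV[R]_d.

Lemma tens3_sub (A B : tens R d) h1 h2 h3 :
  tens3 (tens_sub A B) h1 h2 h3 = tens3 A h1 h2 h3 - tens3 B h1 h2 h3.
Proof.
rewrite /tens3 -sumrB; apply: eq_bigr => i _; rewrite -sumrB.
apply: eq_bigr => j _; rewrite -sumrB; apply: eq_bigr => k _.
by rewrite /tens_sub; ring.
Qed.

Lemma tens3_Z (A : tens R d) (w s : vec) (k : R) :
  tens3 A w (k *: s) (k *: s) = k ^+ 2 * tens3 A w s s.
Proof.
rewrite /tens3 mulr_sumr; apply: eq_bigr => i _; rewrite mulr_sumr.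
apply: eq_bigr => j _; rewrite mulr_sumr; apply: eq_bigr => l _.
by rewrite !mxE; ring.
Qed.

Lemma tens3_0 (A : tens R d) (w : vec) : tens3 A w 0 0 = 0.
Proof.
have := tens3_Z A w 0 0; rewrite scale0r expr0n /= mul0r //.
Qed.

Lemma dotv_tens_app (A : tens R d) (w s : vec) :
  dotv w (matvec (tens_app A s) s) = tens3 A w s s.
Proof.
rewrite dotv_matvec /tens3; apply: eq_bigr => a _; apply: eq_bigr => b _.
rewrite mxE mulr_suml; apply: eq_bigr => c _; ring.
Qed.

Lemma lip3_ws (T : vec -> tens R d) LT (y x w s : vec) : lip3 T LT -> enorm w = 1 ->
  `|tens3 (T y) w s s - tens3 (T x) w s s| <= LT * enorm (y - x) * enorm s ^+ 2.
Proof.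
move=> lT w1.
have [s0|sn0] := eqVneq s 0.
  by rewrite s0 !tens3_0 subrr normr0 enorm0 expr0n /= mulr0.
have r0 : 0 < enorm s.
  rewrite lt_def enorm_ge0 andbT; apply/eqP => /enorm_eq0 e; by rewrite e eqxx in sn0.
set u := (enorm s)^-1 *: s.
have u1 : enorm u = 1 by rewrite enormZ ger0_norm ?invr_ge0 ?enorm_ge0 // mulVf // gt_eqF.
have := lT y x w u u w1 u1 u1.
rewrite tens3_sub /u !tens3_Z.
rewrite -mulrBr normrM ger0_norm ?sqr_ge0 // exprVn.
by rewrite ler_pdivrMl ?exprn_gt0 // mulrC.
Qed.

Lemma taylor (G : vec -> vec) H T LT (x s w : vec) :
  is_hess G H -> is_third H T -> lip3 T LT -> enorm w = 1 ->
  `|dotv w (G (x + s)) - dotv w (G x) - dotv w (matvec (H x) s)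
      - 2^-1 * tens3 (T x) w s s| <= LT / 6 * enorm s ^+ 3.
Proof.
move=> hH hT lT w1.
set A := dotv w (matvec (H x) s).
set B := tens3 (T x) w s s.
set c := LT * enorm s ^+ 3.
pose psi2 := fun t : R => dotv w (matvec (H (x + t *: s)) s) - t * B.
have d2 t : is_derive t (1:R) psi2 (tens3 (T (x + t *: s)) w s s - B).
  apply: is_deriveB'.
    apply: (is_derive_line (F := fun y => dotv w (matvec (H y) s))).
    rewrite -dotv_tens_app; apply: is_derive_dotmat; exact: hT.
  exact: is_derive_lin.
have b2 : forall t, 0 <= t <= 1 -> `|psi2 t - psi2 0| <= c / 2%:R * t ^+ 2.
  apply: (bound1D d2) => t /andP[t0 t1].
  apply: le_trans (lip3_ws (x + t *: s) x s lT w1) _.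
  rewrite addrAC subrr add0r enormZ ger0_norm // /c expr1; nra.
pose psi1 := fun t : R => dotv w (G (x + t *: s)) - t * A - t ^+ 2 * (B / 2).
have d1 t : is_derive t (1:R) psi1 (psi2 t - psi2 0).
  apply: (is_derive_eq (f' := dotv w (matvec (H (x + t *: s)) s) - A - t * B)); last first.
    by rewrite /psi2 /A scale0r addr0 mul0r subr0; ring.
  apply: is_deriveB'; first apply: is_deriveB'.
  - apply: (is_derive_line (F := fun y => dotv w (G y))).
    apply: is_derive_dot; exact: hH.
  - exact: is_derive_lin.
  - apply: (is_derive_eq (is_derive_sqrc t (B / 2))).
    by field.
have b1 := bound1D d1 b2 (t := 1).
have := b1; rewrite ler01 lexx /= => /(_ isT).
rewrite /psi1 !scale1r !scale0r !addr0 expr1n mul1r mul0r expr0n /= mul0r !subr0.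
have -> : c / 2%:R / 3%:R = LT / 6 * enorm s ^+ 3 by rewrite /c; field.
rewrite expr1n mulr1 mul1r.
have -> : dotv w (G (x + s)) - A - B / 2 - dotv w (G x) = dotv w (G (x + s)) - dotv w (G x) - A - 2^-1 * B.
  by field.
by [].
Qed.

End Taylor.
Section Avg.
Variables (R : realType) (d n : nat).
Local Notation vec := 'rV[R]_d.

Lemma dotv_sum (I : finType) (P : pred I) (w : vec) (F : I -> vec) :
  dotv w (\sum_(i | P i) F i) = \sum_(i | P i) dotv w (F i).
Proof.
rewrite /dotv exchange_big /=; apply: eq_bigr => j _.
by rewrite summxE mulr_sumr.
Qed.

Lemma dotv_avg (S : {set 'I_n}) (w : vec) (F : 'I_n -> vec) :
  dotv w (avg_v S F) = #|S|%:R^-1 * \sum_(i in S) dotv w (F i).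
Proof. by rewrite /avg_v dotvZr dotv_sum. Qed.

Lemma avg_m_entry (S : {set 'I_n}) (F : 'I_n -> 'M[R]_d) a b :
  avg_m S F a b = #|S|%:R^-1 * \sum_(i in S) F i a b.
Proof. by rewrite /avg_m mxE summxE. Qed.

Lemma matvec_avg (S : {set 'I_n}) (s : vec) (F : 'I_n -> 'M[R]_d) :
  matvec (avg_m S F) s = #|S|%:R^-1 *: \sum_(i in S) matvec (F i) s.
Proof.
apply/matrixP => a b; rewrite (ord1 a) matvecE [RHS]mxE summxE.
under eq_bigr do rewrite avg_m_entry -mulrA mulr_suml mulr_sumr.
under [in RHS]eq_bigr do rewrite matvecE.
rewrite mulr_sumr exchange_big /=; apply: eq_bigr => i _.
by rewrite mulr_sumr; apply: eq_bigr => j _; ring.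
Qed.

Lemma dotv_matvec_avg (S : {set 'I_n}) (w s : vec) (F : 'I_n -> 'M[R]_d) :
  dotv w (matvec (avg_m S F) s) = #|S|%:R^-1 * \sum_(i in S) dotv w (matvec (F i) s).
Proof. by rewrite matvec_avg dotvZr dotv_sum. Qed.

Lemma sum_mul4 (P : pred 'I_n) (X : 'I_n -> R) c p q r :
  (c * \sum_(i | P i) X i) * p * q * r = \sum_(i | P i) c * (X i * p * q * r).
Proof.
rewrite mulr_sumr !mulr_suml; apply: eq_bigr => i _; ring.
Qed.

Lemma tens3_avg (S : {set 'I_n}) (w s : vec) (F : 'I_n -> tens R d) :
  tens3 (avg_t S F) w s s = #|S|%:R^-1 * \sum_(i in S) tens3 (F i) w s s.
Proof.
rewrite /tens3 /avg_t.
under eq_bigr do under eq_bigr do under eq_bigr do rewrite sum_mul4.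
under eq_bigr do under eq_bigr do rewrite exchange_big.
under eq_bigr do rewrite exchange_big.
rewrite exchange_big mulr_sumr; apply: eq_bigr => i _.
rewrite mulr_sumr; apply: eq_bigr => a _.
rewrite mulr_sumr; apply: eq_bigr => b _.
by rewrite mulr_sumr.
Qed.

Lemma avg_bound (S : {set 'I_n}) (e : 'I_n -> R) (K : R) :
  (0 < #|S|)%N -> (forall i, `|e i| <= K) -> `|#|S|%:R^-1 * \sum_(i in S) e i| <= K.
Proof.
move=> S0 he.
have Sp : 0 < #|S|%:R :> R by rewrite ltr0n.
rewrite normrM ger0_norm ?invr_ge0 ?ler0n // ler_pdivrMl //.
apply: le_trans (ler_norm_sum _ _ _) _.
apply: le_trans (ler_sum _ (fun i _ => he i)) _.
by rewrite sumr_const mulr_natl.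
Qed.

End Avg.
Section Model.
Variables (R : realType) (d : nat).
Local Notation vec := 'rV[R]_d.

Lemma d_coord (s w : vec) a : is_derive s w (fun y : vec => y 0 a) (w 0 a).
Proof. exact: (is_derive_entry 0 a (is_derive_id s w)). Qed.

Lemma d_lin (g s w : vec) : is_derive s w (fun y => dotv g y) (dotv g w).
Proof. exact: (is_derive_dot g (is_derive_id s w)). Qed.

Lemma split2 (X Y : 'I_d -> 'I_d -> R) :
  \sum_(a < d) \sum_(b < d) (X a b + Y a b) =
  \sum_(a < d) \sum_(b < d) X a b + \sum_(a < d) \sum_(b < d) Y a b.
Proof. by rewrite -big_split; apply: eq_bigr => a _; rewrite big_split. Qed.

Lemma split3 (X Y : 'I_d -> 'I_d -> 'I_d -> R) :
  \sum_(a < d) \sum_(b < d) \sum_(c < d) (X a b c + Y a b c) =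
  \sum_(a < d) \sum_(b < d) \sum_(c < d) X a b c + \sum_(a < d) \sum_(b < d) \sum_(c < d) Y a b c.
Proof.
rewrite -big_split; apply: eq_bigr => a _; rewrite -big_split; apply: eq_bigr => b _.
by rewrite big_split.
Qed.

Lemma swap13 (F : 'I_d -> 'I_d -> 'I_d -> R) :
  \sum_(a < d) \sum_(b < d) \sum_(c < d) F a b c =
  \sum_(c < d) \sum_(b < d) \sum_(a < d) F a b c.
Proof.
under eq_bigr do rewrite exchange_big.
rewrite exchange_big; apply: eq_bigr => c _; exact: exchange_big.
Qed.

Lemma d_quad (B : 'M[R]_d) (s w : vec) : (forall a b, B a b = B b a) ->
  is_derive s w (fun y => quad B y) (2 * dotv w (matvec B s)).
Proof.
move=> sB.
apply: (is_derive_ext (f := fun y : vec => \sum_(a < d) \sum_(b < d) B a b * (y 0 a * y 0 b))).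
  by move=> y; rewrite /quad dotv_matvec.
apply: (is_derive_eq (f' := \sum_(a < d) \sum_(b < d) B a b * (s 0 a * w 0 b + s 0 b * w 0 a))).
  apply: is_derive_sum' => a; apply: is_derive_sum' => b.
  exact: is_deriveZ' (is_deriveM' (d_coord s w a) (d_coord s w b)).
under eq_bigr do under eq_bigr do rewrite mulrDr.
rewrite split2 dotv_matvec mulr2n mulrDl mul1r; congr (_ + _).
  rewrite exchange_big; apply: eq_bigr => a _; apply: eq_bigr => b _.
  by rewrite sB; ring.
by apply: eq_bigr => a _; apply: eq_bigr => b _; ring.
Qed.

Lemma d_cube (A : tens R d) (s w : vec) :
  (forall a b c, A a b c = A b a c) -> (forall a b c, A a b c = A a c b) ->
  is_derive s w (fun y => tens_cube A y) (3 * tens3 A w s s).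
Proof.
move=> s12 s23.
have s13 a b c : A a b c = A c b a by rewrite s12 s23 s12.
apply: (is_derive_eq (f' := \sum_(a < d) \sum_(j < d) \sum_(k < d)
   ((A a j k * s 0 a * s 0 j) * w 0 k + s 0 k * ((A a j k * s 0 a) * w 0 j + s 0 j * (A a j k * w 0 a))))).
  rewrite /tens_cube /tens3.
  apply: is_derive_sum' => a; apply: is_derive_sum' => j; apply: is_derive_sum' => k.
  apply: is_deriveM' (d_coord s w k).
  apply: is_deriveM' (d_coord s w j).
  exact: is_deriveZ' (d_coord s w a).
under eq_bigr do under eq_bigr do under eq_bigr do rewrite mulrDr addrA.
rewrite split3 split3.
have -> : 3 * tens3 A w s s = tens3 A w s s + tens3 A w s s + tens3 A w s s.
  ring.
congr (_ + _ + _).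
- rewrite swap13 /tens3; apply: eq_bigr => a _; apply: eq_bigr => b _; apply: eq_bigr => c _.
  by rewrite (s13 c b a); ring.
- rewrite exchange_big /tens3; apply: eq_bigr => a _; apply: eq_bigr => b _; apply: eq_bigr => c _.
  by rewrite (s12 b a c); ring.
- rewrite /tens3; apply: eq_bigr => a _; apply: eq_bigr => b _; apply: eq_bigr => c _.
  ring.
Qed.

Lemma d_norm4 (s w : vec) :
  is_derive s w (fun y => enorm y ^+ 4) (4 * dotv s s * dotv s w).
Proof.
apply: (is_derive_ext (f := fun y : vec => dotv y y * dotv y y)).
  by move=> y; rewrite -enorm_sq -exprD.
have h := is_derive_dotprod (is_derive_id s w) (is_derive_id s w).
apply: (is_derive_eq (is_deriveM' h h)).
rewrite (dotvC w s) /=; ring.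
Qed.

Lemma d_model (c0 : R) (g : vec) (B : 'M[R]_d) (A : tens R d) (sigma : R) (s w : vec) :
  (forall a b, B a b = B b a) ->
  (forall a b c, A a b c = A b a c) -> (forall a b c, A a b c = A a c b) ->
  is_derive s w (fun y => c0 + dotv g y + 2^-1 * quad B y + 6^-1 * tens_cube A y
                          + sigma / 4 * enorm y ^+ 4)
    (dotv g w + dotv w (matvec B s) + 2^-1 * tens3 A w s s + sigma * dotv s s * dotv s w).
Proof.
move=> sB s12 s23.
apply: (is_derive_eq (f' := 0 + dotv g w + 2^-1 * (2 * dotv w (matvec B s))
    + 6^-1 * (3 * tens3 A w s s) + sigma / 4 * (4 * dotv s s * dotv s w))).
  apply: is_deriveD'; last exact: is_deriveZ' (d_norm4 s w).
  apply: is_deriveD'; last exact: is_deriveZ' (d_cube s w s12 s23).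
  apply: is_deriveD'; last exact: is_deriveZ' (d_quad s w sB).
  apply: is_deriveD'; last exact: d_lin.
  try by apply: (is_derive_ext (f := cst c0)) => //; exact: is_derive_cst.
by field.
Qed.

End Model.
Section Final.
Variable R : realType.

Lemma cube_pow (e : R) : 0 <= e -> powR e (1/3) ^+ 3 = e.
Proof.
move=> e0; rewrite -powR_mulrn ?powR_ge0 // -powRrM.
have -> : 1 / 3 * 3%:R = 1 :> R by field.
by rewrite powRr1.
Qed.

Lemma sq_pow (e : R) : 0 <= e -> powR e (2/3) = powR e (1/3) ^+ 2.
Proof.
move=> e0; rewrite -powR_mulrn ?powR_ge0 // -powRrM.
by congr (powR e _); field.
Qed.

Lemma final_step (k X r : R) : 0 < k -> 0 <= r -> X <= k * r ^+ 3 ->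
  powR k (- (1/3)) * cbrt X <= r.
Proof.
move=> k0 r0 hX.
rewrite /cbrt; case: ifP => X0; last first.
  apply: le_trans r0; rewrite mulr_ge0_le0 ?powR_ge0 // oppr_le0 powR_ge0 //.
rewrite powRN.
have kp : 0 < k `^ (1/3) by apply: powR_gt0.
rewrite mulrC ler_pdivrMr //.
have -> : r * k `^ (1/3) = (k * r ^+ 3) `^ (1/3).
  rewrite (powRM _ (ltW k0) (exprn_ge0 3 r0)) [RHS]mulrC; congr (_ * _).
  rewrite -powR_mulrn // -powRrM.
  have -> : 3%:R * (1/3) = 1 :> R by field.
  by rewrite powRr1.
apply: ge0_ler_powR => //; rewrite ?nnegrE //.
by apply: le_trans hX.
Qed.

Lemma young1 (a r : R) : 0 <= a -> 0 <= r -> a ^+ 2 * r <= (2 * a ^+ 3 + r ^+ 3) / 3.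
Proof.
move=> a0 r0.
have h : 0 <= (a - r) ^+ 2 * (2 * a + r) by rewrite mulr_ge0 ?sqr_ge0 // addr_ge0 ?mulr_ge0.
rewrite ler_pdivlMr //; nra.
Qed.

Lemma young2 (a r : R) : 0 <= a -> 0 <= r -> a * r ^+ 2 <= (a ^+ 3 + 2 * r ^+ 3) / 3.
Proof.
move=> a0 r0.
have h : 0 <= (a - r) ^+ 2 * (a + 2 * r) by rewrite mulr_ge0 ?sqr_ge0 // addr_ge0 ?mulr_ge0.
rewrite ler_pdivlMr //; nra.
Qed.

End Final.

Theorem lemma2 (R : realType) (d n : nat)
  (f : 'I_n -> 'rV[R]_d -> R) (G : 'I_n -> 'rV[R]_d -> 'rV[R]_d)
  (H : 'I_n -> 'rV[R]_d -> 'M[R]_d) (T : 'I_n -> 'rV[R]_d -> tens R d)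
  (L_f L_g L_b L_t : R)
  (hn : (0 < n)%N)
  (hG : forall i, is_grad (f i) (G i))
  (hH : forall i, is_hess (G i) (H i))
  (hT : forall i, is_third (H i) (T i))
  (lf : forall i, lip0 (f i) L_f)
  (lg : forall i, lip1 (G i) L_g)
  (lb : forall i, lip2 (H i) L_b)
  (lt : forall i, lip3 (T i) L_t)
  (Sg Sb St : {set 'I_n})
  (x_k : 'rV[R]_d) (sigma_k eps theta zeta : R)
  (hsigma : 0 < sigma_k) (heps : 0 < eps) (htheta : 0 < theta) (hzeta : 0 < zeta)
  (s_k : 'rV[R]_d)
  (Dm1 : 'rV[R]_d -> 'rV[R]_d) (Dm2 : 'rV[R]_d -> 'M[R]_d) (Dm3 : 'rV[R]_d -> tens R d) :
  (* full objective f = 1/n sum f_i and its derivatives *)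
  let fF := fun y => avg_s [set: 'I_n] (fun i => f i y) in
  let gradf := fun y => avg_v [set: 'I_n] (fun i => G i y) in
  let hessf := fun y => avg_m [set: 'I_n] (fun i => H i y) in
  let thirdf := fun y => avg_t [set: 'I_n] (fun i => T i y) in
  (* sampled estimates at x_k *)
  let g_k := avg_v Sg (fun i => G i x_k) in
  let B_k := avg_m Sb (fun i => H i x_k) in
  let T_k := avg_t St (fun i => T i x_k) in
  (* cubic-regularized third-order model *)
  let m_k := fun s : 'rV[R]_d =>
    fF x_k + dotv g_k s + 2^-1 * quad B_k s + 6^-1 * tens_cube T_k s
      + sigma_k / 4 * enorm s ^+ 4 in
  (* sampling condition with kappa_g = 1/4, kappa_b = 1/4, kappa_t = 1/2 *)
  enorm (g_k - gradf x_k) <= 4^-1 * eps ->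
  (forall s, enorm (matvec (B_k - hessf x_k) s) <= 4^-1 * powR eps (2/3) * enorm s) ->
  (forall s, enorm (tens_sq T_k s - tens_sq (thirdf x_k) s)
               <= 2^-1 * powR eps (1/3) * enorm s ^+ 2) ->
  (* Dm1, Dm2, Dm3 are the first three derivatives of m_k *)
  is_grad m_k Dm1 -> is_hess Dm1 Dm2 -> is_third Dm2 Dm3 ->
  (* approximate minimization condition *)
  m_k s_k < m_k 0 ->
  chi_m1 (Dm1 s_k) <= theta * enorm s_k ^+ 3 ->
  chi_m2 (Dm2 s_k) <= theta * enorm s_k ^+ 2 ->
  chi_m3 zeta (Dm2 s_k) (Dm3 s_k) <= theta * enorm s_k ->
  let eps1 := eps in
  let kappa_k := sigma_k + L_t / 2 + theta + 4^-1 in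
  powR kappa_k (- (1/3)) * cbrt (enorm (gradf (x_k + s_k)) - 2^-1 * eps1)
    <= enorm s_k.
Proof.
move=> fF gradf hessf thirdf g_k B_k T_k m_k hg hb ht hgrad hhess hthird hdec
  hchi1 hchi2 hchi3.
rewrite /is_true; cbv zeta.
have sH i := hess_sym (hG i) (hH i) (lb i).
have sT23 i := third_sym23 (hH i) (hT i) (lt i).
have sT12 i := third_sym12 (sH i) (hT i).
have sB a b : B_k a b = B_k b a.
  rewrite /B_k !avg_m_entry; congr (_ * _); apply: eq_bigr => i _; exact: sH.
have sTk12 a b c : T_k a b c = T_k b a c.
  rewrite /T_k /avg_t; congr (_ * _); apply: eq_bigr => i _; exact: sT12.
have sTk23 a b c : T_k a b c = T_k a c b.
  rewrite /T_k /avg_t; congr (_ * _); apply: eq_bigr => i _; exact: sT23.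
set r := enorm s_k.
have r0 : 0 <= r := enorm_ge0 s_k.
have rpos : 0 < r.
  rewrite lt_def r0 andbT; apply/eqP => /enorm_eq0 e.
  by move: hdec; rewrite e ltxx.
set i0 : 'I_n := Ordinal hn.
have Lt0 : 0 <= L_t.
  set u := r^-1 *: s_k.
  have u1 : enorm u = 1 by rewrite enormZ ger0_norm ?invr_ge0 // mulVf // gt_eqF.
  have := lt i0 s_k 0 u u u u1 u1 u1.
  rewrite subr0 -/r => h.
  have := le_trans (normr_ge0 _) h.
  by rewrite pmulr_lge0.
have kpos : 0 < sigma_k + L_t / 2 + theta + 4^-1 by lra.
apply: final_step => //.
set N := enorm (gradf (x_k + s_k)).
set a := powR eps (1/3).
have a0 : 0 <= a := powR_ge0 _ _.
have a3 : a ^+ 3 = eps by rewrite cube_pow // ltW.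
have a2 : powR eps (2/3) = a ^+ 2 by rewrite sq_pow // ltW.
suff key : N <= eps / 2 + (sigma_k + L_t / 6 + theta + 4^-1) * r ^+ 3.
  have : 0 <= r ^+ 3 by rewrite exprn_ge0.
  move=> h3; nra.
have [N0|Nn0] := eqVneq N 0.
  rewrite N0; have : 0 <= r ^+ 3 by rewrite exprn_ge0.
  move=> h3; nra.
have Npos : 0 < N by rewrite lt_def Nn0 enorm_ge0.
set w := N^-1 *: gradf (x_k + s_k).
have w1 : enorm w = 1 by rewrite enormZ ger0_norm ?invr_ge0 ?enorm_ge0 // mulVf.
have wN : dotv w (gradf (x_k + s_k)) = N.
  rewrite dotvZl -enorm_sq -/N expr2 mulrA mulVf // mul1r //.
have tay : `|dotv w (gradf (x_k + s_k)) - dotv w (gradf x_k)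
     - dotv w (matvec (hessf x_k) s_k) - 2^-1 * tens3 (thirdf x_k) w s_k s_k|
     <= L_t / 6 * r ^+ 3.
  rewrite /gradf /hessf /thirdf !dotv_avg dotv_matvec_avg tens3_avg.
  have -> : forall (c X Y Z W : R), c * X - c * Y - c * Z - 2^-1 * (c * W)
     = c * (X - Y - Z - 2^-1 * W) by move=> *; ring.
  rewrite -!sumrB mulr_sumr -sumrB.
  apply: avg_bound; first by rewrite cardsT card_ord.
  move=> i; exact: taylor (hH i) (hT i) (lt i) w1.
have dm := d_model (fF x_k) g_k sigma_k s_k w sB sTk12 sTk23.
have dm' := hgrad s_k w.
have eD : dotv g_k w + dotv w (matvec B_k s_k) + 2^-1 * tens3 T_k w s_k s_k
          + sigma_k * dotv s_k s_k * dotv s_k w = dotv (Dm1 s_k) w.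
  by rewrite -(@derive_val _ _ _ _ _ _ _ dm) -(@derive_val _ _ _ _ _ _ _ dm').
have hD : dotv (Dm1 s_k) w <= theta * r ^+ 3.
  apply: le_trans (CS' _ _) _; rewrite w1 mulr1; exact: hchi1.
have T1 : dotv w (gradf x_k) - dotv g_k w <= 4^-1 * eps.
  rewrite (dotvC g_k) -dotvBr; apply: le_trans (CS' _ _) _.
  by rewrite w1 mul1r -enormN opprB.
have T2 : dotv w (matvec (hessf x_k) s_k) - dotv w (matvec B_k s_k) <= 4^-1 * a ^+ 2 * r.
  rewrite -dotvBr -matvecB; apply: le_trans (CS' _ _) _.
  rewrite w1 mul1r.
  have -> : matvec (hessf x_k - B_k) s_k = - matvec (B_k - hessf x_k) s_k.
    by rewrite !matvecB opprB.
  by rewrite enormN -a2; apply: hb.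
have T3 : tens3 (thirdf x_k) w s_k s_k - tens3 T_k w s_k s_k <= 2^-1 * a * r ^+ 2.
  rewrite !tens3_sq -dotvBr; apply: le_trans (CS' _ _) _.
  by rewrite w1 mul1r -enormN opprB; apply: ht.
have T4 : - (sigma_k * dotv s_k s_k * dotv s_k w) <= sigma_k * r ^+ 3.
  rewrite -enorm_sq -/r.
  have := CS s_k w; rewrite w1 mulr1 -/r => h.
  have : - r <= dotv s_k w by move: h; rewrite ler_norml => /andP[].
  have : 0 <= sigma_k * r ^+ 2 by rewrite mulr_ge0 ?sqr_ge0 // ltW.
  move=> h1 h2.
  have -> : sigma_k * r ^+ 3 = sigma_k * r ^+ 2 * r by rewrite exprSr mulrA.
  rewrite -mulrN; apply: ler_wpM2l => //; lra.
have Y1 := young1 a0 r0.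
have Y2 := young2 a0 r0.
rewrite a3 in Y1 Y2.
move: tay; rewrite wN ler_norml => /andP[_ tay].
set X1 := dotv w (gradf x_k) in tay T1.
set X2 := dotv w (matvec (hessf x_k) s_k) in tay T2.
set X3 := tens3 (thirdf x_k) w s_k s_k in tay T3.
set Z1 := dotv g_k w in eD T1.
set Z2 := dotv w (matvec B_k s_k) in eD T2.
set Z3 := tens3 T_k w s_k s_k in eD T3.
set Z4 := sigma_k * dotv s_k s_k * dotv s_k w in eD T4.
set DD := dotv (Dm1 s_k) w in eD hD.
set r3 := r ^+ 3 in tay hD T4 Y1 Y2 *.
set a2' := a ^+ 2 in T2 Y1.
set r2 := r ^+ 2 in T3 Y2.
have e2 : a2' * r <= (2 * eps + r3) / 3 by [].
have e3 : a * r2 <= (eps + 2 * r3) / 3 by [].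
have T2' : X2 - Z2 <= 4^-1 * (a2' * r) by rewrite mulrA.
have T3' : X3 - Z3 <= 2^-1 * (a * r2) by rewrite mulrA.
clear -tay T1 T2' T3' T4 eD hD e2 e3 Lt0.
lra.
Qed.
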